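(* For an odd integer $t\ge1$, in $S_{\mathrm{alg}}$, $$h(1)\,h[-1]^t\mathbf 1=\sum_{k\ge0}\binom{t}{2k+1}\frac{(2k+1)!}{k!\,(-24)^k}\,h(-1)^{t-2k-1}\mathbf 1.$$
   Context: $S_{\mathrm{alg}}=\mathbb{Q}[h(-1),h(-2),\dots]$ is the rank-one Heisenberg VOA with vacuum $\mathbf 1=1$; $h(n)$ for $n<0$ is multiplication by $h(n)$, $h(0)=0$, and $h(n)=n\,\partial/\partial h(-n)$ for $n>0$. The square-bracket mode $h[-1]$ is $h[-1]=\mathrm{Res}_w\,h(w)(\log(1+w))^{-1}=\sum_{k\ge0}c_k\,h(k-1)$ where $h(w)=\sum_m h(m)w^{-m-1}$ and $\sum_{k\ge0}c_kw^{k-1}=1/\log(1+w)$, so $h[-1]=h(-1)+\tfrac12h(0)-\tfrac1{12}h(1)+\tfrac1{24}h(2)-\cdots$. *)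

(* Defs.v *)
From HB Require Import structures.
From mathcomp Require Import all_boot all_order all_algebra.
From mathcomp Require Import finmap.
From mathcomp.multinomials Require Import monalg.
Set Implicit Arguments. Unset Strict Implicit. Unset Printing Implicit Defensive.
Import Order.TTheory GRing.Theory Num.Theory.
Local Open Scope ring_scope.

(* S_alg = Q[h(-1), h(-2), ...]: polynomials over rat in variables indexed by
   nat; the variable with index i stands for h(-(i+1)). *)
Definition Salg := {malg rat[cmonom nat]}.

Definition hvar (i : nat) : Salg := << ucm i >>.

Definition vac : Salg := 1.

Definition dmon (i : nat) (m : cmonom nat) : Salg :=
  (m i)%:R *: << divcm m (ucm i) >>.
Definition pderiv (i : nat) (p : Salg) : Salg :=
  \sum_(m <- msupp p) p@_m *: dmon i m.

(* Heisenberg modes h(n), n : int:  n<0 multiplication by h(n), h(0) = 0,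
   n>0 acts as n * d/d h(-n). *)
Definition hmode (n : int) (p : Salg) : Salg :=
  match n with
  | Posz 0 => 0
  | Posz k.+1 => k.+1%:R *: pderiv k p
  | Negz k => hvar k * p
  end.

(* Coefficients c_k of  sum_k c_k w^(k-1) = 1/log(1+w), i.e. the coefficients of
   the reciprocal of the power series log(1+w)/w = sum_j (-1)^j w^j/(j+1). *)
Definition logc (j : nat) : rat := (-1) ^+ j / (j.+1)%:R.
Fixpoint cseq (k : nat) : seq rat :=
  match k with
  | 0 => [:: 1]
  | k'.+1 => let s := cseq k' in
      rcons s (- \sum_(1 <= j < k'.+2) logc j * nth 0 s (k'.+1 - j))
  end.
Definition cc (k : nat) : rat := nth 0 (cseq k) k.

(* A bound beyond which all terms c_k h(k-1) p vanish: h(k-1) for k >= 2 is a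
   multiple of d/d h(-(k-1)), which kills p once k-2 exceeds every variable
   index occurring in p. *)
Definition hbound (p : Salg) : nat :=
  (\max_(m <- msupp p) \max_(i <- finsupp m) i)%N.+3.

Definition hbr_m1 (p : Salg) : Salg :=
  \sum_(k < hbound p) cc k *: hmode (k%:Z - 1) p.

(* Main.v *)
Require Import Defs.
From HB Require Import structures.
From mathcomp Require Import all_boot all_order all_algebra.
From mathcomp Require Import finmap.
From mathcomp.multinomials Require Import monalg.
Import Order.TTheory GRing.Theory Num.Theory.
Local Open Scope fset_scope.
Local Open Scope ring_scope.
From mathcomp Require Import ring lra zify.
Lemma size_cseq k : size (cseq k) = k.+1.
Proof. by elim: k => //= k IH; rewrite size_rcons IH. Qed.
Lemma nth_cseq k i : (i <= k)%N -> nth 0 (cseq k) i = cc i.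
Proof.
elim: k => [|k IH]; first by rewrite leqn0 => /eqP ->.
rewrite leq_eqVlt => /orP [/eqP -> //|]; rewrite ltnS => hi.
by rewrite [cseq _]/= nth_rcons size_cseq ltnS hi IH.
Qed.
Lemma ccS k : cc k.+1 = - \sum_(1 <= j < k.+2) logc j * cc (k.+1 - j).
Proof.
rewrite /cc [cseq _]/= nth_rcons size_cseq ltnn eqxx; congr (- _).
rewrite big_nat_cond [RHS]big_nat_cond; apply: eq_bigr => j /andP [/andP [h1 h2] _].
rewrite (@nth_cseq k) //; lia.
Qed.
Lemma cc0 : cc 0 = 1. Proof. by []. Qed.
Lemma cc1 : cc 1 = 1/2.
Proof. rewrite ccS big_nat1 subnn cc0 /logc expr1; field; done. Qed.
Lemma cc2 : cc 2 = -(1/12).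
Proof.
rewrite ccS big_ltn // big_nat1 /= cc1 cc0 /logc expr1 expr2.
field; done.
Qed.

Lemma hm0 p : hmode (0%:Z - 1) p = hvar 0 * p. Proof. by []. Qed.
Lemma hm1 p : hmode (1%:Z - 1) p = 0. Proof. by []. Qed.
Lemma hm2 p : hmode (2%:Z - 1) p = 1%:R *: pderiv 0 p. Proof. by []. Qed.

Definition x : Salg := hvar 0.
Fixpoint mn n : cmonom nat := if n is n'.+1 then mmul (ucm 0%N) (mn n') else @mone (cmonom nat).

Lemma mnE n i : mn n i = if i == 0%N then n else 0%N.
Proof.
elim: n => [|n IH] /= in i *; first by rewrite cm1; case: ifP.
by rewrite cmM cmU IH; case: i.
Qed.

Lemma mn0 : mn 0 = @mone (cmonom nat).
Proof. by []. Qed.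
Lemma mnS n : mn n.+1 = mmul (ucm 0%N) (mn n).
Proof. by []. Qed.
Lemma xn n : x ^+ n = << mn n >>.
Proof.
elim: n => [|n IH]; first by rewrite expr0 mn0.
rewrite exprS IH /x /hvar malgM_def fgmulUU mulr1 mnS.
by congr (<< _ >>).
Qed.

Lemma pderivEw i p (d : {fset cmonom nat}) : msupp p `<=` d ->
  pderiv i p = \sum_(m <- d) p@_m *: dmon i m.
Proof.
move=> le; rewrite /pderiv (big_fset_incl _ le) //= => m _ /mcoeff_outdom ->.
by rewrite scale0r.
Qed.

Lemma pderivD i p q : pderiv i (p + q) = pderiv i p + pderiv i q.
Proof.
rewrite (@pderivEw i (p+q) (msupp p `|` msupp q)) ?msuppD_le //.
rewrite (@pderivEw i p (msupp p `|` msupp q)) ?fsubsetUl //.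
rewrite (@pderivEw i q (msupp p `|` msupp q)) ?fsubsetUr //.
by rewrite -big_split /=; apply: eq_bigr => m _; rewrite mcoeffD scalerDl.
Qed.

Lemma pderivZ i c p : pderiv i (c *: p) = c *: pderiv i p.
Proof.
rewrite (@pderivEw i (c *: p) (msupp p)); last exact: msuppZ_le.
rewrite /pderiv scaler_sumr.
apply: eq_bigr => m _; rewrite mcoeffZ; symmetry; exact: scalerA.
Qed.

Lemma pderiv0 i : pderiv i 0 = 0.
Proof. by rewrite /pderiv msupp0 big_seq_fset0. Qed.

Lemma pderiv_sum i (I : Type) (r : seq I) (P : pred I) F :
  pderiv i (\sum_(j <- r | P j) F j) = \sum_(j <- r | P j) pderiv i (F j).
Proof. exact: (big_morph _ (pderivD i) (pderiv0 i)). Qed.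

Lemma pderivU i m : pderiv i << m >> = dmon i m.
Proof. by rewrite /pderiv msuppU1 big_seq_fset1 mcoeffUU scale1r. Qed.

Lemma divmn n : divcm (mn n) (ucm 0%N) = mn n.-1.
Proof. by apply/eqP/cmP => i; rewrite divcmE !mnE ucmE; case: i => //=; rewrite subn1. Qed.

Lemma pderiv_xn n : pderiv 0 (x ^+ n) = n%:R *: x ^+ n.-1.
Proof. by rewrite xn pderivU /dmon mnE eqxx divmn -xn. Qed.

Definition only0 (p : Salg) :=
  forall m, m \in msupp p -> forall i, (0 < i)%N -> m i = 0%N.

Lemma only0D p q : only0 p -> only0 q -> only0 (p + q).
Proof.
move=> hp hq m /(fsubsetP (msuppD_le p q)); rewrite in_fsetU => /orP [/hp|/hq] //.
Qed.

Lemma only0Z c p : only0 p -> only0 (c *: p).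
Proof. by move=> hp m /(fsubsetP (msuppZ_le c p)); exact: hp. Qed.

Lemma only00 : only0 0.
Proof. by move=> m; rewrite msupp0 in_fset0. Qed.

Lemma only0xn n : only0 (x ^+ n).
Proof. by rewrite xn => m; rewrite msuppU1 in_fset1 => /eqP -> i; rewrite mnE; case: i. Qed.

Lemma only0_sum (r : seq nat) (F : nat -> Salg) :
  (forall j, only0 (F j)) -> only0 (\sum_(j <- r) F j).
Proof. by move=> hF; apply: big_ind => //; [exact: only00 | exact: only0D]. Qed.

Lemma hbound_only0 p : only0 p -> hbound p = 3%N.
Proof.
move=> hp; rewrite /hbound big1_seq // => m /andP [_ hm].
rewrite big1_seq // => i /andP [_ hi]; apply/eqP; apply: contraTT hi => i0.
by rewrite -cmE_neq0 negbK; apply/eqP; apply: (hp m hm); rewrite lt0n.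
Qed.

Lemma hbr_helper (p : Salg) (c2 : rat) :
  1 *: (hvar 0 * p) + c2 *: (1%:R *: pderiv 0 p) = x * p + c2 *: pderiv 0 p.
Proof.
have h1 : 1 *: (hvar 0 * p) = x * p by exact: scale1r.
have h2 : c2 *: (1%:R *: pderiv 0 p) = c2 *: pderiv 0 p by rewrite scale1r.
exact: (f_equal2 +%R h1 h2).
Qed.

Lemma hbr_only0 p : only0 p -> hbr_m1 p = x * p + cc 2 *: pderiv 0 p.
Proof.
move=> hp; rewrite /hbr_m1 hbound_only0 // !big_ord_recr big_ord0 /=.
rewrite cc0 scaler0 addr0 add0r subnn.
move: (cc 2) => c2.
exact: hbr_helper.
Qed.

Definition b : rat := -(1/24).
Definition c2v : rat := -(1/12).
Definition A t j : rat := (t ^_ j.*2)%:R / (j`!)%:R * b ^+ j.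
Definition S t : Salg := \sum_(0 <= j < t.+1) A t j *: x ^+ (t - j.*2).

Lemma A_small t j : (t < j.*2)%N -> A t j = 0.
Proof. by move=> h; rewrite /A ffact_small // !mul0r. Qed.

Lemma A0 t : A t 0 = 1.
Proof. by rewrite /A ffactn0 fact0 expr0 divr1 mulr1. Qed.

Lemma ffact_pascal t m : (t.+1 ^_ m.+1 = t ^_ m.+1 + m.+1 * t ^_ m)%N.
Proof. rewrite -!bin_ffact binS factS mulnDl; ring. Qed.

Lemma fact_neq0 j : (j`!)%:R != 0 :> rat.
Proof. by rewrite pnatr_eq0 -lt0n fact_gt0. Qed.

Lemma A_rec t j : A t.+1 j.+1 = A t j.+1 + c2v * (t - j.*2)%N%:R * A t j.
Proof.
rewrite /A.
have hf : (t.+1 ^_ (j.+1).*2 = t ^_ (j.+1).*2 + (j.*2).+2 * (t ^_ j.*2 * (t - j.*2)))%N.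
  by rewrite doubleS ffact_pascal (ffactnSr t (j.*2)).
rewrite hf factS natrD !natrM exprS.
have -> : ((j.*2).+2)%:R = 2 * (j.+1)%:R :> rat by rewrite -doubleS -mul2n natrM.
have h1 := fact_neq0 j.
have h2 : (j.+1)%:R != 0 :> rat by rewrite pnatr_eq0.
rewrite /c2v /b. field. by rewrite h1 addrC natr1.
Qed.

Lemma xE : x = hvar 0. Proof. by []. Qed.

Lemma coefE t k : A t k * (t - k.*2)%N%:R =
  ('C(t, k.*2.+1))%:R * ((k.*2.+1)`!)%:R / ((k`!)%:R * (-24) ^+ k).
Proof.
rewrite /A /b -natrM bin_ffact ffactnSr natrM.
have hb : -(1/24) = ((-24) ^-1 : rat) by rewrite invrN mul1r.
rewrite hb exprVn.
have h1 := fact_neq0 k.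
have h2 : ((-24) ^+ k : rat) != 0 by rewrite expf_neq0.
field. by rewrite h1 h2.
Qed.

Opaque x fgscale fgmul fgadd.
Lemma T1 t j : x * (A t j *: x ^+ (t - j.*2)) = A t j *: x ^+ (t.+1 - j.*2).
Proof.
case: (leqP (j.*2) t) => h.
  rewrite (subSn h) exprS. exact: (esym (scalerAr _ _ _)).
rewrite (@A_small t j h) !scale0r. exact: mulr0.
Qed.

Lemma T2 t j : c2v *: pderiv 0 (A t j *: x ^+ (t - j.*2)) =
  (c2v * (t - j.*2)%N%:R * A t j) *: x ^+ (t.+1 - (j.+1).*2).
Proof.
rewrite pderivZ pderiv_xn.
have -> : (t - j.*2).-1 = (t.+1 - (j.+1).*2)%N by rewrite doubleS; lia.
rewrite !scalerA.
have e : c2v * A t j * (t - j.*2)%N%:R = c2v * (t - j.*2)%N%:R * A t j by rewrite mulrAC.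
by rewrite e.
Qed.

Lemma SS_gen (V : lmodType rat) (f : nat -> V) t :
  \sum_(0 <= j < t.+1) A t j *: f (t.+1 - j.*2)%N +
  \sum_(0 <= j < t.+1) (c2v * (t - j.*2)%N%:R * A t j) *: f (t.+1 - (j.+1).*2)%N =
  \sum_(0 <= j < t.+2) A t.+1 j *: f (t.+1 - j.*2)%N.
Proof.
rewrite big_nat_recl // [RHS]big_nat_recl //.
have E3 : \sum_(0 <= i < t) A t i.+1 *: f (t.+1 - i.+1.*2)%N =
          \sum_(0 <= i < t.+1) A t i.+1 *: f (t.+1 - i.+1.*2)%N.
  rewrite [RHS]big_nat_recr //=.
  rewrite (@A_small t t.+1); last by rewrite doubleS; lia.
  by rewrite scale0r addr0.
rewrite E3 -addrA -big_split /= !A0; congr (_ + _).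
by apply: eq_bigr => i _; rewrite A_rec scalerDl.
Qed.

Opaque pderiv A.
Lemma SS t : x * S t + c2v *: pderiv 0 (S t) = S t.+1.
Proof.
rewrite /S pderiv_sum mulr_sumr scaler_sumr.
rewrite (eq_bigr (fun j => A t j *: x ^+ (t.+1 - j.*2))); last by move=> j _; exact: T1.
rewrite [X in _ + X](eq_bigr (fun j => (c2v * (t - j.*2)%N%:R * A t j) *: x ^+ (t.+1 - (j.+1).*2))); last by move=> j _; exact: T2.
exact: (@SS_gen _ (fun n => x ^+ n) t).
Qed.

Lemma cc2c : cc 2 = c2v. Proof. exact: cc2. Qed.

Lemma only0S t : only0 (S t).
Proof. by rewrite /S; apply: only0_sum => j; apply: only0Z; exact: only0xn. Qed.

Lemma S0 : S 0 = vac.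
Proof. by rewrite /S big_nat1 A0 scale1r sub0n expr0. Qed.

Lemma iter_S t : iter t hbr_m1 vac = S t.
Proof.
elim: t => [|t IH]; first by rewrite S0.
rewrite iterS IH hbr_only0; last exact: only0S.
rewrite cc2c; exact: SS.
Qed.

Lemma hmode1 p : hmode 1 p = 1%:R *: pderiv 0 p. Proof. by []. Qed.

Lemma T3 t k : 1%:R *: pderiv 0 (A t k *: x ^+ (t - k.*2)) =
  (A t k * (t - k.*2)%N%:R) *: x ^+ (t - k.*2.+1).
Proof.
rewrite scale1r pderivZ pderiv_xn scalerA.
by have -> : (t - k.*2).-1 = (t - k.*2.+1)%N by lia.
Qed.

Theorem mainTheorem4 (t : nat) (ht : odd t) :
  hmode 1 (iter t hbr_m1 vac) =
  \sum_(k < t.+1)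
     ((('C(t, k.*2.+1))%:R * ((k.*2.+1)`!)%:R / ((k`!)%:R * (-24) ^+ k) : rat)
       *: (hvar 0 ^+ (t - k.*2.+1) * vac)).
Proof.
rewrite iter_S hmode1 /S pderiv_sum scaler_sumr big_mkord.
apply: eq_bigr => k _.
rewrite T3 coefE.
rewrite /vac (mulr1 (hvar 0 ^+ _)) -xE.
by [].
Qed.
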